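(* Assume (C1) and (C2). For any $u\in\mathcal{M}$, $$I(u)=\max_{s,t\ge0}I(su^++tu^-).$$
   Context: Fix real numbers $p,q,r$ with $1<p<q$, $\frac p2$ a positive integer, and $r\ge1$, and functions $a,b,c:\mathbb{Z}\to(0,+\infty)$. Conditions: - (C1) There is $b_0>0$ with $b(n)\ge b_0$ for all $n$ and $b(n)\to+\infty$ as $|n|\to\infty$. - (C2) There is $c_0>0$ with $c(n)\le c_0$ for all $n$ and $\sum_n c(n)<+\infty$. Notation for a real sequence $u=(u(n))_{n\in\mathbb{Z}}$: $\Delta u(n)=u(n+1)-u(n)$, $u^+(n)=\max\{u(n),0\}$, $u^-(n)=\min\{u(n),0\}$. Spaces: - $E$ is the set of real sequences $u$ with $\|u\|:=\big(\sum_n[a(n)|\Delta u(n)|^p+b(n)|u(n)|^p]\big)^{1/p}<\infty$. - $\mathcal{D}=\{u\in E:\sum_n c(n)|u(n)|^q\ln|u(n)|^r<+\infty\}$, where terms with $u(n)=0$ are read as $0$. For $u,v\in\mathcal{D}$: - $I(u)=\frac1p\|u\|^p+\frac{r}{q^2}\sum_n c(n)|u(n)|^q-\frac1q\sum_n c(n)|u(n)|^q\ln|u(n)|^r$. - $\langle I'(u),v\rangle=\sum_n[a(n)|\Delta u(n)|^{p-2}\Delta u(n)\Delta v(n)+b(n)|u(n)|^{p-2}u(n)v(n)]-\sum_n c(n)|u(n)|^{q-2}u(n)v(n)\ln|u(n)|^r$. $\mathcal{M}=\{u\in\mathcal{D}:u^+\ne0,\ u^-\neq0,\ \langle I'(u),u^+\rangle=0,\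 \langle I'(u),u^-\rangle=0\}$. *)

(* Defs.v *)
From Stdlib Require Import Reals Lra ZArith.
From Coquelicot Require Import Coquelicot.
Open Scope R_scope.

(* x ^ a for x >= 0 and real a, with the convention 0 ^ a = 0. *)
Definition rpow (x a : R) : R := if Req_EM_T x 0 then 0 else Rpower x a.

(* Summation over Z: split into n >= 0 and n <= -1. *)
Definition ex_sumZ (f : Z -> R) : Prop :=
  ex_series (fun n : nat => f (Z.of_nat n)) /\
  ex_series (fun n : nat => f (- Z.of_nat (S n))%Z).

Definition sumZ (f : Z -> R) : R :=
  Series (fun n : nat => f (Z.of_nat n)) +
  Series (fun n : nat => f (- Z.of_nat (S n))%Z).

Definition Delta (u : Z -> R) (n : Z) : R := u (n + 1)%Z - u n.
Definition posp (u : Z -> R) : Z -> R := fun n => Rmax (u n) 0.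
Definition negp (u : Z -> R) : Z -> R := fun n => Rmin (u n) 0.

(* ln |x|^r, read as 0 when x = 0 *)
Definition lnpow (x r : R) : R := if Req_EM_T x 0 then 0 else ln (Rpower (Rabs x) r).

Definition normp_term (p : R) (a b : Z -> R) (u : Z -> R) (n : Z) : R :=
  a n * rpow (Rabs (Delta u n)) p + b n * rpow (Rabs (u n)) p.

Definition normp (p : R) (a b : Z -> R) (u : Z -> R) : R := sumZ (normp_term p a b u).

Definition inE (p : R) (a b : Z -> R) (u : Z -> R) : Prop := ex_sumZ (normp_term p a b u).

Definition log_term (q r : R) (c : Z -> R) (u : Z -> R) (n : Z) : R :=
  c n * rpow (Rabs (u n)) q * lnpow (u n) r.

(* D: u in E with sum c|u|^q ln|u|^r finite (read as absolute convergence) *)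
Definition inD (p q r : R) (a b c : Z -> R) (u : Z -> R) : Prop :=
  inE p a b u /\ ex_sumZ (fun n => Rabs (log_term q r c u n)).

Definition Ifun (p q r : R) (a b c : Z -> R) (u : Z -> R) : R :=
  / p * normp p a b u
  + r / (q ^ 2) * sumZ (fun n => c n * rpow (Rabs (u n)) q)
  - / q * sumZ (log_term q r c u).

Definition dI (p q r : R) (a b c : Z -> R) (u v : Z -> R) : R :=
  sumZ (fun n => a n * rpow (Rabs (Delta u n)) (p - 2) * Delta u n * Delta v n
               + b n * rpow (Rabs (u n)) (p - 2) * u n * v n)
  - sumZ (fun n => c n * rpow (Rabs (u n)) (q - 2) * u n * v n * lnpow (u n) r).

Definition inM (p q r : R) (a b c : Z -> R) (u : Z -> R) : Prop :=
  inD p q r a b c u /\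
  posp u <> (fun _ => 0) /\ negp u <> (fun _ => 0) /\
  dI p q r a b c u (posp u) = 0 /\ dI p q r a b c u (negp u) = 0.

Definition condC1 (b : Z -> R) : Prop :=
  (exists b0, 0 < b0 /\ forall n, b0 <= b n) /\
  (forall M, exists N : Z, forall n, (N < Z.abs n)%Z -> M < b n).

Definition condC2 (c : Z -> R) : Prop :=
  (exists c0, 0 < c0 /\ forall n, c n <= c0) /\ ex_sumZ c.

(* Main.v *)
Require Import Defs.
From Stdlib Require Import Reals Lra Lia ZArith FunctionalExtensionality.
From Coquelicot Require Import Coquelicot.
Import Defs.
Open Scope R_scope.

Lemma exZ_le (f g : Z -> R) : (forall n, Rabs (f n) <= g n) -> ex_sumZ g -> ex_sumZ f.
Proof.
  intros H [H1 H2]; split.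
  - apply (@ex_series_le R_AbsRing R_CompleteNormedModule _ (fun n => g (Z.of_nat n))).
    intros n; apply (H _). auto.
  - apply (@ex_series_le R_AbsRing R_CompleteNormedModule _ (fun n => g (- Z.of_nat (S n))%Z)).
    intros n; apply (H _). auto.
Qed.

Lemma exZ_plus (f g : Z -> R) : ex_sumZ f -> ex_sumZ g -> ex_sumZ (fun n => f n + g n).
Proof.
  intros [H1 H2] [H3 H4]; split; apply (ex_series_plus _ _ H1 H3) || apply (ex_series_plus _ _ H2 H4).
Qed.

Lemma exZ_scal (c : R) (f : Z -> R) : ex_sumZ f -> ex_sumZ (fun n => c * f n).
Proof.
  intros [H1 H2]; split; apply (ex_series_scal_l c _ H1) || apply (ex_series_scal_l c _ H2).
Qed.

Lemma exZ_minus (f g : Z -> R) : ex_sumZ f -> ex_sumZ g -> ex_sumZ (fun n => f n - g n).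
Proof.
  intros [H1 H2] [H3 H4]; split; apply (ex_series_minus _ _ H1 H3) || apply (ex_series_minus _ _ H2 H4).
Qed.

Lemma exZ_abs (f : Z -> R) : ex_sumZ (fun n => Rabs (f n)) -> ex_sumZ f.
Proof. intros H; apply (exZ_le _ _ (fun n => Rle_refl _) H). Qed.



Lemma exZ_ext (f g : Z -> R) : (forall n, f n = g n) -> ex_sumZ f -> ex_sumZ g.
Proof. intros E [H1 H2]; split.
 - apply (ex_series_ext (fun n : nat => f (Z.of_nat n))); auto.
 - apply (ex_series_ext (fun n : nat => f (- Z.of_nat (S n))%Z)); auto. Qed.

Lemma sumZ_ext (f g : Z -> R) : (forall n, f n = g n) -> sumZ f = sumZ g.
Proof. intros E; unfold sumZ; f_equal; apply Series_ext; intros; apply E. Qed.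

Lemma sumZ_plus (f g : Z -> R) : ex_sumZ f -> ex_sumZ g -> sumZ (fun n => f n + g n) = sumZ f + sumZ g.
Proof. intros [H1 H2] [H3 H4]; unfold sumZ; rewrite !Series_plus; auto; ring. Qed.

Lemma sumZ_minus (f g : Z -> R) : ex_sumZ f -> ex_sumZ g -> sumZ (fun n => f n - g n) = sumZ f - sumZ g.
Proof. intros [H1 H2] [H3 H4]; unfold sumZ; rewrite !Series_minus; auto; ring. Qed.

Lemma sumZ_scal (c : R) (f : Z -> R) : sumZ (fun n => c * f n) = c * sumZ f.
Proof. unfold sumZ; rewrite !Series_scal_l; ring. Qed.

Lemma Series0 : Series (fun _ : nat => 0) = 0.
Proof. rewrite (Series_ext _ (fun n : nat => 0 * 0)) by (intros; ring). rewrite (Series_scal_l 0 (fun _ => 0)). ring. Qed.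

Lemma sumZ_ge0 (f : Z -> R) : (forall n, 0 <= f n) -> ex_sumZ f -> 0 <= sumZ f.
Proof.
  intros H [H1 H2]; unfold sumZ.
  assert (0 <= Series (fun n : nat => f (Z.of_nat n))).
  { rewrite <- Series0. apply Series_le; auto. intros; split; [lra|apply H]. }
  assert (0 <= Series (fun n : nat => f (- Z.of_nat (S n))%Z)).
  { rewrite <- Series0. apply Series_le; auto. intros; split; [lra|apply H]. }
  lra.
Qed.

Lemma sumZ_le (f g : Z -> R) : (forall n, f n <= g n) -> ex_sumZ f -> ex_sumZ g -> sumZ f <= sumZ g.
Proof.
  intros H Hf Hg. assert (0 <= sumZ (fun n => g n - f n)).
  { apply sumZ_ge0. intros n; specialize (H n); lra. apply exZ_minus; auto. }
  rewrite sumZ_minus in H0; auto; lra.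
Qed.

Lemma JL (n : nat) (x y a b : R) : 0 <= x -> 0 <= y -> 0 <= a -> 0 <= b ->
  (a*x+b*y)^(S n) <= (x+y)^n * (a^(S n)*x + b^(S n)*y).
Proof.
  intros Hx Hy Ha Hb. induction n as [|n IH].
  - simpl; lra.
  - change ((a*x+b*y)^(S (S n))) with ((a*x+b*y) * (a*x+b*y)^(S n)).
    assert (H0 : 0 <= a*x+b*y) by nra.
    apply Rle_trans with ((a*x+b*y) * ((x+y)^n * (a^(S n)*x + b^(S n)*y))).
    { apply Rmult_le_compat_l; auto. }
    assert (Hab : 0 <= (a - b) * (a^(S n) - b^(S n))).
    { destruct (Rle_dec a b).
      - assert (a^(S n) <= b^(S n)) by (apply pow_incr; lra). nra.
      - assert (b^(S n) <= a^(S n)) by (apply pow_incr; lra). nra. }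
    assert (Hp : 0 <= (x+y)^n) by (apply pow_le; lra).
    change ((x+y)^(S n)) with ((x+y)*(x+y)^n).
    change (a^(S (S n))) with (a * a^(S n)). change (b^(S (S n))) with (b * b^(S n)).
    assert (0 <= (x+y)^n * (x*y*((a - b) * (a^(S n) - b^(S n))))).
    { apply Rmult_le_pos; auto. apply Rmult_le_pos; auto. nra. }
    nra.
Qed.

Lemma pow_neg_even (j : nat) (x : R) : (-x)^(2*j+2) = x^(2*j+2).
Proof.
  replace (2*j+2)%nat with (2*(j+1))%nat by lia. rewrite !pow_mult.
  f_equal. ring.
Qed.

Lemma pow_neg_odd (j : nat) (x : R) : (-x)^(2*j+1) = - x^(2*j+1).
Proof.
  replace (-x) with ((-1)*x) by ring. rewrite Rpow_mult_distr.
  replace (2*j+1)%nat with (S (2*j)) by lia. rewrite pow_1_odd. ring.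
Qed.

Lemma pow_even_nonneg (j : nat) (x : R) : 0 <= x^(2*j).
Proof. rewrite pow_mult. apply pow_le. nra. Qed.

Lemma pow_even_abs (j : nat) (x : R) : x^(2*j+2) = Rabs x ^(2*j+2).
Proof.
  replace (2*j+2)%nat with (2*(j+1))%nat by lia. rewrite !pow_mult. now rewrite pow2_abs.
Qed.

Lemma pow_S2 (j : nat) (x : R) : x^(2*j+2) = x^(2*j+1) * x.
Proof. replace (2*j+2)%nat with (S (2*j+1)) by lia. simpl. ring. Qed.

Lemma pow_S1 (j : nat) (x : R) : x^(2*j+1) = x^(2*j) * x.
Proof. replace (2*j+1)%nat with (S (2*j)) by lia. simpl. ring. Qed.

Lemma Jensen (j : nat) (X Y s t : R) : 0 <= s -> 0 <= t -> 0 <= X * Y ->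
  (s*X+t*Y)^(2*j+2) <= (X+Y)^(2*j+1) * (s^(2*j+2)*X + t^(2*j+2)*Y).
Proof.
  intros Hs Ht HXY.
  replace (2*j+2)%nat with (S (2*j+1)) by lia.
  destruct (Rle_dec 0 X) as [HX|HX]; [destruct (Rle_dec 0 Y) as [HY|HY]|].
  - apply JL; auto.
  - assert (X <= 0) by nra. assert (Y <= 0) by nra. clear HX HY.
    pose proof (JL (2*j+1) (-X) (-Y) s t) as HJ.
    specialize (HJ ltac:(lra) ltac:(lra) Hs Ht).
    replace (S (2*j+1)) with (2*j+2)%nat in HJ |- * by lia.
    replace (s * -X + t * -Y) with (-(s*X+t*Y)) in HJ by ring.
    rewrite pow_neg_even in HJ.
    replace (-X + -Y) with (-(X+Y)) in HJ by ring. rewrite pow_neg_odd in HJ.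
    nra.
  - assert (Y <= 0) by nra.
    pose proof (JL (2*j+1) (-X) (-Y) s t) as HJ.
    specialize (HJ ltac:(lra) ltac:(lra) Hs Ht).
    replace (S (2*j+1)) with (2*j+2)%nat in HJ |- * by lia.
    replace (s * -X + t * -Y) with (-(s*X+t*Y)) in HJ by ring.
    rewrite pow_neg_even in HJ.
    replace (-X + -Y) with (-(X+Y)) in HJ by ring. rewrite pow_neg_odd in HJ.
    nra.
Qed.

Lemma Rabs_eq0 (x : R) : Rabs x = 0 -> x = 0.
Proof. intros H. destruct (Req_EM_T x 0); auto. exfalso. apply Rabs_no_R0 in n. auto. Qed.

Lemma rpow_even (j : nat) (x : R) : rpow (Rabs x) (INR (2*j+2)) = x^(2*j+2).
Proof.
  unfold rpow. destruct (Req_EM_T (Rabs x) 0) as [E|E].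
  - apply Rabs_eq0 in E. subst. rewrite pow_i; auto; lia.
  - rewrite Rpower_pow. now rewrite <- pow_even_abs.
    pose proof (Rabs_pos x). lra.
Qed.

Lemma rpow_odd (j : nat) (x : R) : rpow (Rabs x) (INR (2*j+2) - 2) * x = x^(2*j+1).
Proof.
  replace (INR (2*j+2) - 2) with (INR (2*j)) by (rewrite !plus_INR; simpl; ring).
  unfold rpow. destruct (Req_EM_T (Rabs x) 0) as [E|E].
  - apply Rabs_eq0 in E. subst. rewrite pow_i; [ring|lia].
  - rewrite Rpower_pow. rewrite pow_S1. f_equal.
    destruct j. simpl; auto.
    replace (2 * S j)%nat with (2*j+2)%nat by lia. now rewrite <- pow_even_abs.
    pose proof (Rabs_pos x). lra.
Qed.

Lemma ln_le1 (x : R) : 0 < x -> ln x <= x - 1.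
Proof. intros H. pose proof (exp_ineq1_le (ln x)). rewrite exp_ln in H0; auto. lra. Qed.

Lemma ylny (y : R) : 0 < y -> y - 1 <= y * ln y.
Proof.
  intros H. pose proof (ln_le1 (/y) (Rinv_0_lt_compat _ H)). rewrite ln_Rinv in H0; auto.
  apply Rmult_le_compat_l with (r := y) in H0; [|lra].
  rewrite Rmult_minus_distr_l, Rinv_r in H0 by lra. lra.
Qed.

Lemma young (y th : R) : 0 < y -> 0 < th < 1 -> Rpower y th <= th * y + 1 - th.
Proof.
  intros Hy Hth. unfold Rpower. set (a := ln y). set (m := th * a).
  assert (Ea : y = exp a) by (unfold a; now rewrite exp_ln).
  set (E := exp m). assert (HE : 0 < E) by apply exp_pos.
  assert (H1 : E * (1 + (a - m)) <= y).
  { rewrite Ea. replace a with (m + (a - m)) at 2 by ring. rewrite exp_plus.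
    apply Rmult_le_compat_l; [left; apply exp_pos|apply exp_ineq1_le]. }
  assert (H2 : E * (1 + (- m)) <= 1).
  { replace 1 with (exp (m + - m)) at 2 by (replace (m + - m) with 0 by ring; apply exp_0).
    rewrite exp_plus. apply Rmult_le_compat_l; [left; apply exp_pos|apply exp_ineq1_le]. }
  apply Rmult_le_compat_l with (r := th) in H1; [|lra].
  apply Rmult_le_compat_l with (r := 1 - th) in H2; [|lra].
  replace (th * a) with m by reflexivity. fold E.
  assert (E = th * (E * (1 + (a - m))) + (1 - th) * (E * (1 + - m))) by (unfold m; ring).
  lra.
Qed.

Lemma rpow0 (a : R) : rpow 0 a = 0.
Proof. unfold rpow. destruct (Req_EM_T 0 0); lra. Qed.

Lemma rpow_pos (x a : R) : 0 < x -> rpow x a = Rpower x a.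
Proof. intros H. unfold rpow. destruct (Req_EM_T x 0); auto; lra. Qed.

Lemma rpow_nonneg (x a : R) : 0 <= rpow x a.
Proof. unfold rpow. destruct (Req_EM_T x 0). lra. unfold Rpower. left; apply exp_pos. Qed.

Lemma hineq (j : nat) (q s : R) : INR (2*j+2) < q -> 0 <= s ->
  (s^(2*j+2) - 1) / INR (2*j+2) <= (rpow s q - 1) / q.
Proof.
  intros Hq Hs. set (p := INR (2*j+2)) in *.
  assert (Hp : 0 < p) by (unfold p; apply lt_0_INR; lia).
  destruct (Req_EM_T s 0) as [->|Hs0].
  - rewrite rpow0, pow_i by lia. unfold Rdiv.
    assert (/q < /p) by (apply Rinv_lt_contravar; nra). lra.
  - assert (Hs' : 0 < s) by lra. rewrite rpow_pos by auto.
    assert (E : s^(2*j+2) = Rpower (Rpower s q) (p/q)).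
    { rewrite Rpower_mult. replace (q * (p/q)) with p by (field; lra). unfold p. now rewrite Rpower_pow. }
    pose proof (young (Rpower s q) (p/q) ltac:(unfold Rpower; apply exp_pos)
      ltac:(split; [apply Rdiv_lt_0_compat; lra | apply (Rdiv_lt_1 p q); lra])) as HY.
    rewrite <- E in HY.
    apply (Rmult_le_reg_l (p*q)); [nra|].
    replace (p * q * ((s ^ (2 * j + 2) - 1) / p)) with (q * (s ^ (2 * j + 2) - 1)) by (field; lra).
    replace (p * q * ((Rpower s q - 1) / q)) with (p * (Rpower s q - 1)) by (field; lra).
    apply Rmult_le_compat_l with (r := q) in HY; [|lra].
    replace (q * (p / q * Rpower s q + 1 - p / q)) with (p * Rpower s q + q - p) in HY by (field; lra).
    lra.
Qed.

Lemma ln_Rpower (x a : R) : ln (Rpower x a) = a * ln x.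
Proof. unfold Rpower. apply ln_exp. Qed.

Lemma cside (q r cc v s : R) : 0 < q -> 0 < r -> 0 < cc -> v <> 0 -> 0 <= s ->
  r / q^2 * (cc * rpow (Rabs (s*v)) q - cc * rpow (Rabs v) q)
  - / q * (cc * rpow (Rabs (s*v)) q * lnpow (s*v) r - cc * rpow (Rabs v) q * lnpow v r)
  <= - ((rpow s q - 1) / q) * (cc * rpow (Rabs v) q * lnpow v r).
Proof.
  intros Hq Hr Hc Hv Hs.
  assert (Hav : 0 < Rabs v) by (apply Rabs_pos_lt; auto).
  rewrite (rpow_pos (Rabs v)) by auto.
  assert (HV : 0 < Rpower (Rabs v) q) by (unfold Rpower; apply exp_pos).
  destruct (Req_EM_T s 0) as [->|Hs0].
  - rewrite Rmult_0_l, Rabs_R0, !rpow0. unfold lnpow at 1. destruct (Req_EM_T 0 0); [|lra].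
    assert (0 < r / q^2 * (cc * Rpower (Rabs v) q)).
    { apply Rmult_lt_0_compat. apply Rdiv_lt_0_compat; auto. nra. nra. }
    unfold Rdiv in *. lra.
  - assert (Hs' : 0 < s) by lra.
    rewrite (rpow_pos s) by auto.
    rewrite Rabs_mult, (Rabs_right s) by lra.
    rewrite rpow_pos by nra.
    rewrite <- Rpower_mult_distr by auto.
    unfold lnpow. destruct (Req_EM_T (s*v) 0) as [E|_]. { apply Rmult_integral in E; lra. }
    destruct (Req_EM_T v 0) as [E|_]; [lra|].
    rewrite !ln_Rpower. rewrite Rabs_mult, (Rabs_right s) by lra. rewrite ln_mult by auto.
    set (S := Rpower s q). set (V := Rpower (Rabs v) q).
    assert (HS : 0 < S) by (unfold S, Rpower; apply exp_pos).
    pose proof (ylny S HS) as HY. unfold S at 3 in HY. rewrite ln_Rpower in HY. fold S in HY.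
    set (ls := ln s) in *. set (lv := ln (Rabs v)).
    assert (Hk : 0 <= cc * V * r / q^2 * (S * (q * ls) - (S - 1))).
    { apply Rmult_le_pos; [|lra]. unfold Rdiv. apply Rmult_le_pos; [|left; apply Rinv_0_lt_compat; nra].
      unfold V; apply Rmult_le_pos; [apply Rmult_le_pos|]; lra. }
    assert (Eq : - ((S - 1) / q) * (cc * V * (r * lv)) -
      (r / q ^ 2 * (cc * (S * V) - cc * V) - / q * (cc * (S * V) * (r * (ls + lv)) - cc * V * (r * lv)))
      = cc * V * r / q^2 * (S * (q * ls) - (S - 1))) by (field; lra).
    lra.
Qed.

Lemma Abound (q r cc v : R) : 0 < q -> 0 < r -> 0 < cc ->
  cc * rpow (Rabs v) q <= Rabs (cc * rpow (Rabs v) q * lnpow v r) + exp (q / r) * cc.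
Proof.
  intros Hq Hr Hc. pose proof (exp_pos (q/r)).
  destruct (Req_EM_T v 0) as [->|Hv].
  - rewrite Rabs_R0, rpow0. pose proof (Rabs_pos (cc * 0 * lnpow 0 r)). nra.
  - assert (Hav : 0 < Rabs v) by (apply Rabs_pos_lt; auto).
    rewrite rpow_pos by auto. unfold lnpow. destruct (Req_EM_T v 0); [lra|].
    rewrite ln_Rpower.
    assert (HV : 0 < Rpower (Rabs v) q) by (unfold Rpower; apply exp_pos).
    destruct (Rle_dec 1 (r * ln (Rabs v))).
    + rewrite (Rabs_right (cc * _ * (r * _))). 2: { apply Rle_ge. apply Rmult_le_pos; nra. }
      assert (cc * Rpower (Rabs v) q * 1 <= cc * Rpower (Rabs v) q * (r * ln (Rabs v))).
      { apply Rmult_le_compat_l; nra. } pose proof (Rabs_pos 0). nra.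
    + assert (ln (Rabs v) < / r).
      { apply (Rmult_lt_reg_l r); auto. rewrite Rinv_r; lra. }
      assert (Rpower (Rabs v) q <= exp (q / r)).
      { unfold Rpower. left. apply exp_increasing. unfold Rdiv. nra. }
      pose proof (Rabs_pos (cc * Rpower (Rabs v) q * (r * ln (Rabs v)))). nra.
Qed.

Lemma LTbound (q r cc v s : R) : 0 < q -> 0 < cc -> 0 <= s ->
  Rabs (cc * rpow (Rabs (s*v)) q * lnpow (s*v) r) <=
  rpow s q * (Rabs (r * ln s) + 1) * (cc * rpow (Rabs v) q + Rabs (cc * rpow (Rabs v) q * lnpow v r)).
Proof.
  intros Hq Hc Hs.
  pose proof (rpow_nonneg (Rabs v) q).
  pose proof (Rabs_pos (cc * rpow (Rabs v) q * lnpow v r)).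
  pose proof (Rabs_pos (r * ln s)).
  destruct (Req_EM_T s 0) as [->|Hs0].
  - rewrite Rmult_0_l, Rabs_R0, !rpow0, Rmult_0_r, Rmult_0_l, Rabs_R0. lra.
  - destruct (Req_EM_T v 0) as [->|Hv].
    + rewrite Rmult_0_r, Rabs_R0, !rpow0. rewrite Rmult_0_r, Rmult_0_l, Rabs_R0.
      apply Rmult_le_pos; [|lra]. apply Rmult_le_pos; [apply rpow_nonneg|lra].
    + assert (Hs' : 0 < s) by lra. assert (Hav : 0 < Rabs v) by (apply Rabs_pos_lt; auto).
      rewrite (rpow_pos s) by auto. rewrite (Rabs_mult s v), (Rabs_right s) by lra.
      rewrite !rpow_pos by nra. rewrite <- Rpower_mult_distr by auto.
      unfold lnpow. destruct (Req_EM_T (s*v) 0) as [E|_]. { apply Rmult_integral in E; lra. }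
      destruct (Req_EM_T v 0) as [E|_]; [lra|].
      rewrite !ln_Rpower. rewrite (Rabs_mult s v), (Rabs_right s) by lra. rewrite ln_mult by auto.
      set (S := Rpower s q) in *. set (V := Rpower (Rabs v) q) in *.
      assert (HS : 0 < S) by (unfold S, Rpower; apply exp_pos).
      assert (HV : 0 < V) by (unfold V, Rpower; apply exp_pos).
      replace (cc * (S * V) * (r * (ln s + ln (Rabs v)))) with (S * (cc * V) * (r * ln s + r * ln (Rabs v))) by ring.
      assert (HSV : 0 < S * (cc * V)) by (apply Rmult_lt_0_compat; [|apply Rmult_lt_0_compat]; lra).
      rewrite (Rabs_mult (S * (cc*V))), (Rabs_right (S * (cc*V))) by lra.
      pose proof (Rabs_triang (r * ln s) (r * ln (Rabs v))).
      assert (HcV : 0 < cc * V) by (apply Rmult_lt_0_compat; lra).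
      rewrite (Rabs_mult (cc * V)), (Rabs_right (cc*V)) by lra.
      pose proof (Rabs_pos (r * ln (Rabs v))).
      assert (0 < S * (cc * V)) by nra.
      assert (S * (cc * V) * Rabs (r * ln s + r * ln (Rabs v)) <= S * (cc * V) * (Rabs (r * ln s) + Rabs (r * ln (Rabs v)))).
      { apply Rmult_le_compat_l; lra. }
      assert (Eq : S * (Rabs (r * ln s) + 1) * (cc * V + cc * V * Rabs (r * ln (Rabs v))) =
        S * (cc * V) * (Rabs (r * ln s) + Rabs (r * ln (Rabs v))) + S * (cc*V) * (1 + Rabs (r * ln s) * Rabs (r * ln (Rabs v)))) by ring.
      assert (0 <= S * (cc*V) * (1 + Rabs (r * ln s) * Rabs (r * ln (Rabs v)))).
      { apply Rmult_le_pos; [lra|]. pose proof (Rmult_le_pos _ _ H1 H3). lra. }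
      lra.
Qed.

Lemma normpart (j : nat) (e X Y s t : R) : 0 < e -> 0 <= s -> 0 <= t -> 0 <= X * Y ->
  / INR (2*j+2) * (e*(s*X+t*Y)^(2*j+2) - e*(X+Y)^(2*j+2)) <=
  (s^(2*j+2)-1)/INR (2*j+2) * (e*(X+Y)^(2*j+1)*X) + (t^(2*j+2)-1)/INR (2*j+2) * (e*(X+Y)^(2*j+1)*Y).
Proof.
  intros He Hs Ht HXY. pose proof (Jensen j X Y s t Hs Ht HXY) as HJ.
  assert (HP : 0 < INR (2*j+2)) by (apply lt_0_INR; lia).
  rewrite (pow_S2 j (X+Y)).
  assert (Eq : (s^(2*j+2)-1)/INR (2*j+2) * (e*(X+Y)^(2*j+1)*X) + (t^(2*j+2)-1)/INR (2*j+2) * (e*(X+Y)^(2*j+1)*Y)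
     - / INR (2*j+2) * (e*(s*X+t*Y)^(2*j+2) - e*((X+Y)^(2*j+1)*(X+Y)))
     = / INR (2*j+2) * e * ((X+Y)^(2*j+1) * (s^(2*j+2)*X + t^(2*j+2)*Y) - (s*X+t*Y)^(2*j+2))) by (field; lra).
  assert (0 <= / INR (2*j+2) * e * ((X+Y)^(2*j+1) * (s^(2*j+2)*X + t^(2*j+2)*Y) - (s*X+t*Y)^(2*j+2))).
  { apply Rmult_le_pos; [|lra]. apply Rmult_le_pos; [left; apply Rinv_0_lt_compat|]; lra. }
  lra.
Qed.

Lemma npos_bound (j : nat) (e X Y : R) : 0 < e -> 0 <= X * Y ->
  0 <= e*(X+Y)^(2*j+1)*X <= e*(X+Y)^(2*j+2).
Proof.
  intros He HXY. rewrite pow_S2, !pow_S1. pose proof (pow_even_nonneg j (X+Y)) as H0.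
  assert (0 <= (X+Y)*X <= (X+Y)*(X+Y)) by nra.
  split.
  - replace (e * ((X + Y) ^ (2 * j) * (X + Y)) * X) with (e * (X + Y) ^ (2 * j) * ((X + Y) * X)) by ring.
    apply Rmult_le_pos; [apply Rmult_le_pos|]; lra.
  - replace (e * ((X + Y) ^ (2 * j) * (X + Y)) * X) with (e * (X + Y) ^ (2 * j) * ((X + Y) * X)) by ring.
    replace (e * ((X + Y) ^ (2 * j) * (X + Y) * (X + Y))) with (e * (X + Y) ^ (2 * j) * ((X + Y) * (X + Y))) by ring.
    apply Rmult_le_compat_l; [apply Rmult_le_pos|]; lra.
Qed.

Lemma ntw_bound (j : nat) (e X Y s t : R) : 0 < e -> 0 <= s -> 0 <= t -> 0 <= X * Y ->
  0 <= e*(s*X+t*Y)^(2*j+2) <= (s+t)^(2*j+2) * (e*(X+Y)^(2*j+2)).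
Proof.
  intros He Hs Ht HXY. rewrite (pow_even_abs j (s*X+t*Y)), (pow_even_abs j (X+Y)).
  assert (Hab : Rabs (s*X+t*Y) <= (s+t) * Rabs (X+Y)).
  { assert (HC : (0<=X /\ 0<=Y) \/ (X<=0 /\ Y<=0)).
    { destruct (Rle_dec 0 X); destruct (Rle_dec 0 Y); try (left; lra); right; nra. }
    destruct HC as [[HX HY]|[HX HY]].
    - assert (0 <= s*X) by nra. assert (0 <= t*Y) by nra. assert (s*X <= (s+t)*X) by nra.
      assert (t*Y <= (s+t)*Y) by nra.
      rewrite !Rabs_right by lra. lra.
    - assert (s*X <= 0) by nra. assert (t*Y <= 0) by nra. assert ((s+t)*X <= s*X) by nra.
      assert ((s+t)*Y <= t*Y) by nra.
      rewrite !Rabs_left1 by lra. lra. }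
  split.
  - apply Rmult_le_pos; [lra|]. apply pow_le, Rabs_pos.
  - rewrite <- Rmult_assoc, (Rmult_comm _ e), Rmult_assoc, <- Rpow_mult_distr.
    apply Rmult_le_compat_l; [lra|]. apply pow_incr. split; [apply Rabs_pos|auto].
Qed.

Lemma rpow_q2 (v q : R) : rpow (Rabs v) (q-2) * v * v = rpow (Rabs v) q.
Proof.
  destruct (Req_EM_T v 0) as [->|Hv].
  - rewrite Rabs_R0, !rpow0. ring.
  - assert (Hav : 0 < Rabs v) by (apply Rabs_pos_lt; auto).
    rewrite !rpow_pos by auto.
    replace q with ((q-2) + INR 2) at 2 by (simpl; ring).
    rewrite Rpower_plus, Rpower_pow by auto. rewrite pow2_abs. ring.
Qed.

Lemma maxmin (x : R) : x = Rmax x 0 + Rmin x 0.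
Proof. unfold Rmax, Rmin; destruct (Rle_dec x 0); lra. Qed.

Lemma XY_nonneg (x1 x0 : R) : 0 <= (Rmax x1 0 - Rmax x0 0) * (Rmin x1 0 - Rmin x0 0).
Proof. unfold Rmax, Rmin; destruct (Rle_dec x1 0); destruct (Rle_dec x0 0); nra. Qed.

Lemma PQ_nonneg (x : R) : 0 <= Rmax x 0 * Rmin x 0.
Proof. unfold Rmax, Rmin; destruct (Rle_dec x 0); nra. Qed.

Lemma sign_cases (x : R) : (0 < x /\ Rmax x 0 = x /\ Rmin x 0 = 0) \/
  (x < 0 /\ Rmax x 0 = 0 /\ Rmin x 0 = x) \/ (x = 0 /\ Rmax x 0 = 0 /\ Rmin x 0 = 0).
Proof. unfold Rmax, Rmin; destruct (Rle_dec x 0); destruct (Rle_dec 0 x); destruct (Rle_dec x 0); lra. Qed.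

Definition Fv p q r (a b c : Z -> R) v n := / p * normp_term p a b v n + r / q^2 * (c n * rpow (Rabs (v n)) q) - / q * log_term q r c v n.
Definition Npos p (a b u : Z -> R) n := a n * rpow (Rabs (Delta u n)) (p - 2) * Delta u n * Delta (posp u) n + b n * rpow (Rabs (u n)) (p - 2) * u n * posp u n.
Definition Nneg p (a b u : Z -> R) n := a n * rpow (Rabs (Delta u n)) (p - 2) * Delta u n * Delta (negp u) n + b n * rpow (Rabs (u n)) (p - 2) * u n * negp u n.
Definition Lpos q r (c u : Z -> R) n := c n * rpow (Rabs (u n)) (q - 2) * u n * posp u n * lnpow (u n) r.
Definition Lneg q r (c u : Z -> R) n := c n * rpow (Rabs (u n)) (q - 2) * u n * negp u n * lnpow (u n) r.
Definition wf (s t : R) (u : Z -> R) n := s * posp u n + t * negp u n.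

Lemma Ifun_sum p q r a b c v : ex_sumZ (normp_term p a b v) -> ex_sumZ (fun n => c n * rpow (Rabs (v n)) q) ->
  ex_sumZ (log_term q r c v) -> Ifun p q r a b c v = sumZ (Fv p q r a b c v).
Proof.
  intros H1 H2 H3. unfold Fv, Ifun.
  rewrite sumZ_minus, sumZ_plus, !sumZ_scal; auto.
  - apply exZ_scal; auto.
  - apply exZ_scal; auto.
  - apply exZ_plus; apply exZ_scal; auto.
  - apply exZ_scal; auto.
Qed.

Lemma Delta_w s t u n : Delta (wf s t u) n = s * Delta (posp u) n + t * Delta (negp u) n.
Proof. unfold Delta, wf. ring. Qed.

Lemma Delta_u u n : Delta u n = Delta (posp u) n + Delta (negp u) n.
Proof. unfold Delta, posp, negp. rewrite (maxmin (u (n+1)%Z)) at 1. rewrite (maxmin (u n)) at 1. ring. Qed.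

Lemma XYn u n : 0 <= Delta (posp u) n * Delta (negp u) n.
Proof. unfold Delta, posp, negp. apply XY_nonneg. Qed.

Lemma odd_form j e x y : e * rpow (Rabs x) (INR (2*j+2) - 2) * x * y = e * x^(2*j+1) * y.
Proof. rewrite <- (rpow_odd j x). ring. Qed.

Lemma nt_form j a b v n : normp_term (INR (2*j+2)) a b v n = a n * (Delta v n)^(2*j+2) + b n * (v n)^(2*j+2).
Proof. unfold normp_term. now rewrite !rpow_even. Qed.

Lemma rpow_q2c (cc v q : R) : cc * rpow (Rabs v) (q-2) * v * v = cc * rpow (Rabs v) q.
Proof. rewrite <- (rpow_q2 v q). ring. Qed.

Section Main.
Variables (j : nat) (q r : R) (a b c : Z -> R).
Hypotheses (Hpq : INR (2*j+2) < q) (Hr : 1 <= r)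
  (Ha : forall n, 0 < a n) (Hb : forall n, 0 < b n) (Hc : forall n, 0 < c n).

Let p := INR (2*j+2).
Lemma Hp0 : 0 < p. Proof. unfold p; apply lt_0_INR; lia. Qed.
Lemma Hq0 : 0 < q. Proof. pose proof Hp0. unfold p in *. lra. Qed.

Lemma Npos_form u n : Npos p a b u n = a n * (Delta (posp u) n + Delta (negp u) n)^(2*j+1) * Delta (posp u) n
   + b n * (posp u n + negp u n)^(2*j+1) * posp u n.
Proof. unfold Npos, p. rewrite !odd_form. rewrite <- Delta_u. unfold posp, negp. rewrite <- maxmin. reflexivity. Qed.

Lemma Nneg_form u n : Nneg p a b u n = a n * (Delta (negp u) n + Delta (posp u) n)^(2*j+1) * Delta (negp u) n
   + b n * (negp u n + posp u n)^(2*j+1) * negp u n.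
Proof. unfold Nneg, p. rewrite !odd_form. rewrite (Rplus_comm (Delta (negp u) n)), <- Delta_u.
  unfold posp, negp. rewrite (Rplus_comm (Rmin _ _)), <- maxmin. reflexivity. Qed.

Lemma ntu_form u n : normp_term p a b u n = a n * (Delta (posp u) n + Delta (negp u) n)^(2*j+2)
   + b n * (posp u n + negp u n)^(2*j+2).
Proof. unfold p. rewrite nt_form. rewrite <- Delta_u. unfold posp, negp. rewrite <- maxmin. reflexivity. Qed.

Lemma ntw_form s t u n : normp_term p a b (wf s t u) n = a n * (s * Delta (posp u) n + t * Delta (negp u) n)^(2*j+2)
   + b n * (s * posp u n + t * negp u n)^(2*j+2).
Proof. unfold p. rewrite nt_form. rewrite Delta_w. reflexivity. Qed.

Lemma Npos_bnd u n : 0 <= Npos p a b u n <= normp_term p a b u n.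
Proof.
  rewrite Npos_form, ntu_form.
  pose proof (npos_bound j (a n) _ _ (Ha n) (XYn u n)).
  pose proof (npos_bound j (b n) (posp u n) (negp u n) (Hb n) (PQ_nonneg _)). lra.
Qed.

Lemma Nneg_bnd u n : 0 <= Nneg p a b u n <= normp_term p a b u n.
Proof.
  rewrite Nneg_form, ntu_form.
  pose proof (npos_bound j (a n) (Delta (negp u) n) (Delta (posp u) n) (Ha n) ltac:(rewrite Rmult_comm; apply XYn)).
  pose proof (npos_bound j (b n) (negp u n) (posp u n) (Hb n) ltac:(rewrite Rmult_comm; apply PQ_nonneg)).
  rewrite (Rplus_comm (Delta (posp u) n)), (Rplus_comm (posp u n)). lra.
Qed.

Lemma ntw_bnd s t u n : 0 <= s -> 0 <= t -> Rabs (normp_term p a b (wf s t u) n) <= (s+t)^(2*j+2) * normp_term p a b u n.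
Proof.
  intros Hs Ht. rewrite ntw_form, ntu_form.
  pose proof (ntw_bound j (a n) _ _ s t (Ha n) Hs Ht (XYn u n)).
  pose proof (ntw_bound j (b n) (posp u n) (negp u n) s t (Hb n) Hs Ht (PQ_nonneg _)).
  rewrite Rabs_right by lra. lra.
Qed.

Lemma norm_pw s t u n : 0 <= s -> 0 <= t ->
  / p * normp_term p a b (wf s t u) n - / p * normp_term p a b u n <=
  (s^(2*j+2)-1)/p * Npos p a b u n + (t^(2*j+2)-1)/p * Nneg p a b u n.
Proof.
  intros Hs Ht. rewrite ntw_form, ntu_form, Npos_form, Nneg_form.
  rewrite (Rplus_comm (Delta (negp u) n)), (Rplus_comm (negp u n)).
  pose proof (normpart j (a n) _ _ s t (Ha n) Hs Ht (XYn u n)).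
  pose proof (normpart j (b n) (posp u n) (negp u n) s t (Hb n) Hs Ht (PQ_nonneg _)).
  fold p in H, H0. 
  assert (Eq: / p * (a n * (s * Delta (posp u) n + t * Delta (negp u) n) ^ (2 * j + 2) + b n * (s * posp u n + t * negp u n) ^ (2 * j + 2)) -
    / p * (a n * (Delta (posp u) n + Delta (negp u) n) ^ (2 * j + 2) + b n * (posp u n + negp u n) ^ (2 * j + 2)) =
    / p * (a n * (s * Delta (posp u) n + t * Delta (negp u) n) ^ (2 * j + 2) - a n * (Delta (posp u) n + Delta (negp u) n) ^ (2 * j + 2))
    + / p * (b n * (s * posp u n + t * negp u n) ^ (2 * j + 2) - b n * (posp u n + negp u n) ^ (2 * j + 2))) by ring.
  rewrite Eq. lra.
Qed.

Lemma c_pw s t u n : 0 <= s -> 0 <= t ->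
  r / q^2 * (c n * rpow (Rabs (wf s t u n)) q - c n * rpow (Rabs (u n)) q)
  - / q * (log_term q r c (wf s t u) n - log_term q r c u n)
  <= - ((rpow s q - 1)/q) * Lpos q r c u n - ((rpow t q - 1)/q) * Lneg q r c u n.
Proof.
  intros Hs Ht. pose proof Hq0 as Hq. unfold log_term, Lpos, Lneg, wf, posp, negp.
  destruct (sign_cases (u n)) as [[H1 [H2 H3]]|[[H1 [H2 H3]]|[H1 [H2 H3]]]]; rewrite H2, H3.
  - rewrite Rmult_0_r, Rplus_0_r, !Rmult_0_r, Rmult_0_l, Rmult_0_r.
    rewrite rpow_q2c.
    pose proof (cside q r (c n) (u n) s Hq ltac:(lra) (Hc n) ltac:(lra) Hs). lra.
  - rewrite Rmult_0_r, Rplus_0_l, !Rmult_0_r, Rmult_0_l, Rmult_0_r.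
    rewrite rpow_q2c.
    pose proof (cside q r (c n) (u n) t Hq ltac:(lra) (Hc n) ltac:(lra) Ht). lra.
  - rewrite H1, !Rmult_0_r, Rplus_0_r, Rabs_R0, rpow0. unfold lnpow. destruct (Req_EM_T 0 0); [|lra].
    lra.
Qed.

Lemma pw s t u n : 0 <= s -> 0 <= t ->
  Fv p q r a b c (wf s t u) n <= Fv p q r a b c u n
   + (s^(2*j+2)-1)/p * Npos p a b u n + (t^(2*j+2)-1)/p * Nneg p a b u n
   - (rpow s q - 1)/q * Lpos q r c u n - (rpow t q - 1)/q * Lneg q r c u n.
Proof.
  intros Hs Ht. pose proof (norm_pw s t u n Hs Ht). pose proof (c_pw s t u n Hs Ht).
  unfold Fv. lra.
Qed.

Lemma main_ineq u s t : inM p q r a b c u -> ex_sumZ c -> 0 <= s -> 0 <= t ->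
  Ifun p q r a b c (wf s t u) <= Ifun p q r a b c u.
Proof.
  intros [[HE HD] [_ [_ [H1 H2]]]] Hcs Hs Ht.
  pose proof Hq0 as Hq. pose proof Hp0 as Hp.
  assert (Hr0 : 0 < r) by lra.
  assert (E_LTu : ex_sumZ (log_term q r c u)) by exact (exZ_abs _ HD).
  assert (Aabs : forall v n, Rabs (c n * rpow (Rabs (v n)) q) = c n * rpow (Rabs (v n)) q).
  { intros v n. apply Rabs_right. apply Rle_ge, Rmult_le_pos; [left; auto|apply rpow_nonneg]. }
  assert (E_Au : ex_sumZ (fun n => c n * rpow (Rabs (u n)) q)).
  { apply (exZ_le _ (fun n => Rabs (log_term q r c u n) + exp (q/r) * c n)).
    - intros n. rewrite Aabs. apply Abound; auto.
    - apply exZ_plus; auto. apply exZ_scal; auto. }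
  assert (E_ntw : ex_sumZ (normp_term p a b (wf s t u))).
  { apply (exZ_le _ (fun n => (s+t)^(2*j+2) * normp_term p a b u n)).
    - intros n; apply ntw_bnd; auto.
    - apply exZ_scal; auto. }
  set (Ks := rpow s q * (Rabs (r * ln s) + 1)). set (Kt := rpow t q * (Rabs (r * ln t) + 1)).
  assert (HKs : 0 <= Ks) by (apply Rmult_le_pos; [apply rpow_nonneg|pose proof (Rabs_pos (r * ln s)); lra]).
  assert (HKt : 0 <= Kt) by (apply Rmult_le_pos; [apply rpow_nonneg|pose proof (Rabs_pos (r * ln t)); lra]).
  assert (E_LTwa : ex_sumZ (fun n => Rabs (log_term q r c (wf s t u) n))).
  { apply (exZ_le _ (fun n => (Ks + Kt) * (c n * rpow (Rabs (u n)) q + Rabs (log_term q r c u n)))).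
    - intros n. rewrite Rabs_Rabsolu.
      assert (G : 0 <= c n * rpow (Rabs (u n)) q + Rabs (log_term q r c u n)).
      { pose proof (Rabs_pos (log_term q r c u n)). pose proof (Aabs u n). pose proof (Rabs_pos (c n * rpow (Rabs (u n)) q)). lra. }
      unfold log_term in *. unfold wf, posp, negp.
      destruct (sign_cases (u n)) as [[Ha1 [Ha2 Ha3]]|[[Ha1 [Ha2 Ha3]]|[Ha1 [Ha2 Ha3]]]]; rewrite Ha2, Ha3.
      + rewrite Rmult_0_r, Rplus_0_r.
        pose proof (LTbound q r (c n) (u n) s Hq (Hc n) Hs). fold Ks in H.
        assert (0 <= Kt * (c n * rpow (Rabs (u n)) q + Rabs (c n * rpow (Rabs (u n)) q * lnpow (u n) r))) by (apply Rmult_le_pos; auto).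
        lra.
      + rewrite Rmult_0_r, Rplus_0_l.
        pose proof (LTbound q r (c n) (u n) t Hq (Hc n) Ht). fold Kt in H.
        assert (0 <= Ks * (c n * rpow (Rabs (u n)) q + Rabs (c n * rpow (Rabs (u n)) q * lnpow (u n) r))) by (apply Rmult_le_pos; auto).
        lra.
      + rewrite !Rmult_0_r, Rplus_0_r, Rabs_R0, rpow0, Rmult_0_r, Rmult_0_l, Rabs_R0.
        apply Rmult_le_pos; auto. lra.
    - apply exZ_scal. apply exZ_plus; auto. }
  assert (E_Aw : ex_sumZ (fun n => c n * rpow (Rabs (wf s t u n)) q)).
  { apply (exZ_le _ (fun n => Rabs (log_term q r c (wf s t u) n) + exp (q/r) * c n)).
    - intros n. rewrite Aabs. apply Abound; auto.
    - apply exZ_plus; auto. apply exZ_scal; auto. }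
  assert (E_LTw : ex_sumZ (log_term q r c (wf s t u))) by exact (exZ_abs _ E_LTwa).
  assert (E_Np : ex_sumZ (Npos p a b u)).
  { apply (exZ_le _ (normp_term p a b u)); auto. intros n. pose proof (Npos_bnd u n). rewrite Rabs_right; lra. }
  assert (E_Nn : ex_sumZ (Nneg p a b u)).
  { apply (exZ_le _ (normp_term p a b u)); auto. intros n. pose proof (Nneg_bnd u n). rewrite Rabs_right; lra. }
  assert (E_Lp : ex_sumZ (Lpos q r c u)).
  { apply (exZ_le _ (fun n => Rabs (log_term q r c u n))); auto. intros n.
    unfold Lpos, log_term, posp.
    destruct (sign_cases (u n)) as [[Ha1 [Ha2 Ha3]]|[[Ha1 [Ha2 Ha3]]|[Ha1 [Ha2 Ha3]]]]; rewrite Ha2.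
    - rewrite rpow_q2c. lra.
    - rewrite Rmult_0_r, Rmult_0_l, Rabs_R0. apply Rabs_pos.
    - rewrite Rmult_0_r, Rmult_0_l, Rabs_R0. apply Rabs_pos. }
  assert (E_Ln : ex_sumZ (Lneg q r c u)).
  { apply (exZ_le _ (fun n => Rabs (log_term q r c u n))); auto. intros n.
    unfold Lneg, log_term, negp.
    destruct (sign_cases (u n)) as [[Ha1 [Ha2 Ha3]]|[[Ha1 [Ha2 Ha3]]|[Ha1 [Ha2 Ha3]]]]; rewrite Ha3.
    - rewrite Rmult_0_r, Rmult_0_l, Rabs_R0. apply Rabs_pos.
    - rewrite rpow_q2c. lra.
    - rewrite Rmult_0_r, Rmult_0_l, Rabs_R0. apply Rabs_pos. }
  assert (EF : forall v, ex_sumZ (normp_term p a b v) -> ex_sumZ (fun n => c n * rpow (Rabs (v n)) q) ->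
     ex_sumZ (log_term q r c v) -> ex_sumZ (Fv p q r a b c v)).
  { intros v X1 X2 X3. unfold Fv. apply exZ_minus; [apply exZ_plus|]; apply exZ_scal; auto. }
  rewrite (Ifun_sum _ _ _ _ _ _ (wf s t u)), (Ifun_sum _ _ _ _ _ _ u) by auto.
  set (al := (s^(2*j+2)-1)/p). set (be := (t^(2*j+2)-1)/p).
  set (si := (rpow s q - 1)/q). set (ta := (rpow t q - 1)/q).
  apply Rle_trans with (sumZ (fun n => Fv p q r a b c u n + al * Npos p a b u n + be * Nneg p a b u n
     - si * Lpos q r c u n - ta * Lneg q r c u n)).
  { apply sumZ_le.
    - intros n. apply pw; auto.
    - apply EF; auto.
    - repeat first [assumption | apply EF; assumption | apply exZ_scal | apply exZ_minus | apply exZ_plus]. }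
  rewrite sumZ_minus, sumZ_minus, sumZ_plus, sumZ_plus, !sumZ_scal;
    repeat first [assumption | apply EF; assumption | apply exZ_scal | apply exZ_minus | apply exZ_plus].
  unfold dI in H1, H2. change (sumZ (Npos p a b u) - sumZ (Lpos q r c u) = 0) in H1.
  change (sumZ (Nneg p a b u) - sumZ (Lneg q r c u) = 0) in H2.
  assert (HNp : 0 <= sumZ (Npos p a b u)) by (apply sumZ_ge0; auto; intros n; apply Npos_bnd).
  assert (HNn : 0 <= sumZ (Nneg p a b u)) by (apply sumZ_ge0; auto; intros n; apply Nneg_bnd).
  assert (Has : al <= si) by (apply hineq; auto).
  assert (Hbt : be <= ta) by (apply hineq; auto).
  assert ((al - si) * sumZ (Npos p a b u) <= 0) by nra.
  assert ((be - ta) * sumZ (Nneg p a b u) <= 0) by nra.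
  nra.
Qed.

End Main.


Theorem corollary2p4 (p q r : R) (a b c : Z -> R)
  (Hp : 1 < p) (Hpq : p < q) (Hp2 : exists k : nat, (0 < k)%nat /\ p / 2 = INR k)
  (Hr : 1 <= r)
  (Ha : forall n, 0 < a n) (Hb : forall n, 0 < b n) (Hc : forall n, 0 < c n)
  (HC1 : condC1 b) (HC2 : condC2 c) (u : Z -> R) (Hu : inM p q r a b c u) :
  (forall s t : R, 0 <= s -> 0 <= t ->
     Ifun p q r a b c (fun n => s * posp u n + t * negp u n) <= Ifun p q r a b c u) /\
  (exists s t : R, 0 <= s /\ 0 <= t /\
     Ifun p q r a b c (fun n => s * posp u n + t * negp u n) = Ifun p q r a b c u).
Proof.
  destruct Hp2 as [k [Hk Hk2]]. destruct HC2 as [_ Hcs].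
  assert (Ep : p = INR (2*(k-1)+2)).
  { replace (2*(k-1)+2)%nat with (2*k)%nat by lia. rewrite mult_INR. simpl (INR 2).
    apply (Rmult_eq_compat_l 2) in Hk2. replace (2 * (p/2)) with p in Hk2 by field. lra. }
  subst p. split.
  - intros s t Hs Ht.
    exact (main_ineq (k-1) q r a b c Hpq Hr Ha Hb Hc u s t Hu Hcs Hs Ht).
  - exists 1, 1. split; [lra|]. split; [lra|].
    f_equal. apply functional_extensionality. intros n. unfold posp, negp.
    pose proof (maxmin (u n)). lra.
Qed.
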